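(* There is a constant $C_2>0$, depending only on $p$, such that for every sequence $(\mathcal K_\ell)_{\ell\in\mathbb N_0}$ as below, every $L\in\mathbb N_0$, every choice of nodes $\widetilde z_{\ell,i}$ as below, every $m\in\mathbb N_0$ and every $z\in\mathcal N_L$, the set $$\mathcal Z_m(z):=\{(\ell,i):\ell\in\{0,\dots,L\},\ i\in\widetilde{\mathcal I}_\ell,\ {\rm level}_\ell(\widetilde z_{\ell,i})=m,\ z=\widetilde z_{\ell,i}\}$$ satisfies $|\mathcal Z_m(z)|\le C_2$.
   Context: Geometry: $\Omega\subset\mathbb R^2$ is a bounded simply connected Lipschitz domain with piecewise smooth boundary, $\Gamma\subseteq\partial\Omega$ is connected with Lipschitz relative boundary. Either $\Gamma=\partial\Omega$ (closed case), parametrized by a continuous, piecewise continuously differentiable $\gamma:[a,b]\to\Gamma$ with $\gamma(a)=\gamma(b)$ and $\gamma|_{[a,b)}$ bijective, or $\Gamma\subsetneq\partial\Omega$ (open case), parametrized by a bijective continuous piecewise $C^1$ map $\gamma:[a,b]\to\Gamma$; the one-sided derivatives satisfy $\gamma^{\prime_\ell}(t)\neq0$ for $t\in(a,b]$, $\gamma^{\prime_r}(t)\ne0$ for $t\in[a,b)$, and $\gamma^{\prime_\ell}(t)+c\gamma^{\prime_r}(t)\ne0$ for all $c>0$ (for $t\in[a,b]$ in the closed, $t\in(a,b)$ in the open case). Write $\gamma^{-1}:=(\gamma|_{[a,b)})^{-1}$. Set $o=0$ in the closed and $o=1$ in the open case. Fix $p\in\mathbb N$. Knot vectors: a knot vector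 $\mathcal K_\bullet$ consists of parameter nodes $a=\hat z_0<\dots<\hat z_n=b$ such that $\gamma$ is $C^1$ on each $[\hat z_{j-1},\hat z_j]$, with multiplicities $\#_\bullet\in\{1,\dots,p\}$ at interior nodes and $p+1$ at $\hat z_0,\hat z_n$; nodes $\mathcal N_\bullet=\{\gamma(\hat z_j)\}$ (multiplicities transferred), $N_\bullet=\sum_{j=1}^n\#_\bullet\hat z_j$; the mesh $\mathcal T_\bullet$ consists of the elements $\gamma([\hat z_{j-1},\hat z_j])$; $\hat\kappa_\bullet=\max\{|\gamma^{-1}(T)|/|\gamma^{-1}(T')|:T,T'\in\mathcal T_\bullet,T\cap T'\ne\emptyset\}$. The parameter knots list $\hat z_1,\dots,\hat z_n$ (closed, indices $1,\dots,N_\bullet$) resp. $\hat z_0,\dots,\hat z_n$ (open, indices $-p,\dots,N_\bullet$) increasingly with multiplicity, extended to a nondecreasing $(t_{\bullet,i})_{i\in\mathbb Z}$ with $t_{\bullet,-p}=\dots=t_{\bullet,0}=a$, $t_{\bullet,i}\to\pm\infty$, identically outside $(a,b]$ for all knot vectors. A fixed initial knot vector $\mathcal K_0$ (mesh $\mathcal T_0$) and $\hat\kappa_{\max}\ge1$ are given; $\mathbb K$ is the set of knot vectors with $\hat\kappa_\bullet\le\hat\kappa_{\max}$ obtained from $\mathcal K_0$ by dyadic bisections in the parameter domain and multiplicity increases. $\mathcal K_\circ\in\mathrm{refine}(\mathcal K_\bullet)$ means $\mathcal N_\bullet\subseteq\mathcal N_\circ$, $\#_\bullet z\le\#_\circ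 z$ for $z\in\mathcal N_\bullet$, and every $T\in\mathcal T_\circ$ lies in some $T'\in\mathcal T_\bullet$ with $|\gamma^{-1}(T')|=2^j|\gamma^{-1}(T)|$, $j\in\mathbb N_0$. $(\mathcal K_\ell)_{\ell\in\mathbb N_0}$ is a sequence in $\mathbb K$ starting with $\mathcal K_0$ and with $\mathcal K_{\ell+1}\in\mathrm{refine}(\mathcal K_\ell)$. B-splines: $\hat B_{\bullet,i,0}=\chi_{[t_{\bullet,i-1},t_{\bullet,i})}$, $\hat B_{\bullet,i,q}=\beta_{\bullet,i-1,q}\hat B_{\bullet,i,q-1}+(1-\beta_{\bullet,i,q})\hat B_{\bullet,i+1,q-1}$, $\beta_{\bullet,i,q}(t)=(t-t_{\bullet,i})/(t_{\bullet,i+q}-t_{\bullet,i})$ if $t_{\bullet,i}\neq t_{\bullet,i+q}$, else $0$. Weights/NURBS: initial weights $w_{0,i}>0$ ($i=1-p,\dots,N_0-p$, $w_{0,1-p}=w_{0,N_0-p}$), $\hat w=\sum_kw_{0,k}\hat B_{0,k,p}|_{[a,b]}$; for $\mathcal K_\bullet$, $w_{\bullet,i}$ are the unique coefficients with $\hat w=\sum_kw_{\bullet,k}\hat B_{\bullet,k,p}$ on $[a,b]$; $R_{\bullet,i,p}=(w_{\bullet,i}\hat B_{\bullet,i,p}/\hat w)\circ\gamma^{-1}$, $\bar R_{\bullet,1-p,p}=R_{\bullet,1-p,p}+R_{\bullet,N_\bullet-p,p}$, $\bar R_{\bullet,i,p}=R_{\bullet,i,p}$ otherwise. Multilevel index sets: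 $\widetilde{\mathcal N}_{0\setminus-1}=\mathcal N_0$ and, for $\ell\ge1$, $\widetilde{\mathcal N}_{\ell\setminus\ell-1}=(\mathcal N_\ell\setminus\mathcal N_{\ell-1})\cup\{z\in\mathcal N_\ell\cap\mathcal N_{\ell-1}:\#_\ell z>\#_{\ell-1}z\}$; $\widetilde{\mathcal I}_\ell=\{i\in\{1-p+o,\dots,N_\ell-p-1\}:\mathrm{supp}(\bar R_{\ell,i,p})\cap\widetilde{\mathcal N}_{\ell\setminus\ell-1}\neq\emptyset\}$. For all $\ell$ and $i\in\widetilde{\mathcal I}_\ell$ a node $\widetilde z_{\ell,i}\in\widetilde{\mathcal N}_{\ell\setminus\ell-1}\cap\mathrm{supp}(\bar R_{\ell,i,p})$ is fixed. Level: for $T\in\mathcal T_\bullet$ with ancestor $T_0\in\mathcal T_0$ ($T\subseteq T_0$), $\mathrm{gen}(T)=\log_2(|\gamma^{-1}(T_0)|/|\gamma^{-1}(T)|)\in\mathbb N_0$; for $z\in\mathcal N_\bullet$, ${\rm level}_\bullet(z)=\max\{\mathrm{gen}(T):T\in\mathcal T_\bullet,z\in T\}$. *)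

(* Defs.v *)
From Stdlib Require Import Relations.Relation_Operators.
From HB Require Import structures.
From mathcomp Require Import all_boot all_order all_algebra.
From mathcomp Require Import all_classical all_reals all_analysis.
Set Implicit Arguments. Unset Strict Implicit. Unset Printing Implicit Defensive.
Import Order.TTheory GRing.Theory Num.Theory.
Import numFieldNormedType.Exports.
Local Open Scope classical_set_scope.
Local Open Scope ring_scope.

Section Defs.
Variable R : realType.
Notation V := 'rV[R]_2.

Definition C1_on (f : R -> V) (c d : R) : Prop :=
  exists g : R -> V, {within [set t | c <= t <= d], continuous g} /\
    forall t, c <= t <= d ->
      (fun h => h^-1 *: (f (t + h) - f t))
        @ within [set h | h != 0 /\ c <= t + h <= d] (nbhs (0:R)) --> g t.

Definition left_deriv (f : R -> V) (t : R) (d : V) : Prop :=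
  (fun h => h^-1 *: (f (t + h) - f t)) @ (0:R)^'- --> d.
Definition right_deriv (f : R -> V) (t : R) (d : V) : Prop :=
  (fun h => h^-1 *: (f (t + h) - f t)) @ (0:R)^'+ --> d.

Definition curve_ok (closed : bool) (a b : R) (gam : R -> V) : Prop :=
  a < b /\
  {within [set t | a <= t <= b], continuous gam} /\
  (exists (k : nat) (s : nat -> R), s 0%N = a /\ s k = b /\
     (forall j, (j < k)%N -> s j < s j.+1) /\
     (forall j, (j < k)%N -> C1_on gam (s j) (s j.+1))) /\
  (if closed then gam a = gam b /\
      (forall s t, a <= s < b -> a <= t < b -> gam s = gam t -> s = t)
   else (forall s t, a <= s <= b -> a <= t <= b -> gam s = gam t -> s = t)) /\
  (forall t, a < t <= b -> exists2 d, left_deriv gam t d & d != 0) /\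
  (forall t, a <= t < b -> exists2 d, right_deriv gam t d & d != 0) /\
  (forall t, a < t < b -> forall dl dr, left_deriv gam t dl ->
       right_deriv gam t dr -> forall c : R, 0 < c -> dl + c *: dr != 0) /\
  (* closed case, t = a or t = b: left derivative at b, right derivative at a *)
  (closed -> forall dl dr, left_deriv gam b dl -> right_deriv gam a dr ->
       forall c : R, 0 < c -> dl + c *: dr != 0).

(* A knot vector is the list [:: (zhat_0, #zhat_0); ...; (zhat_n, #zhat_n)]. *)
Definition kv := seq (R * nat).
Definition kz (K : kv) (j : nat) : R := (nth (0, 0%N) K j).1.
Definition km (K : kv) (j : nat) : nat := (nth (0, 0%N) K j).2.
Definition kn (K : kv) : nat := (size K).-1.
Definition kN (K : kv) : nat := (\sum_(1 <= j < (kn K).+1) km K j)%N.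

Definition kv_valid (p : nat) (a b : R) (gam : R -> V) (K : kv) : Prop :=
  (1 < size K)%N /\ kz K 0 = a /\ kz K (kn K) = b /\
  km K 0 = p.+1 /\ km K (kn K) = p.+1 /\
  (forall j, (j < kn K)%N -> kz K j < kz K j.+1) /\
  (forall j, (0 < j < kn K)%N -> (0 < km K j <= p)%N) /\
  (forall j, (0 < j <= kn K)%N -> C1_on gam (kz K j.-1) (kz K j)).

Definition nodes (gam : R -> V) (K : kv) : set V :=
  [set y | exists2 j, (j < size K)%N & gam (kz K j) = y].
Definition nmult (gam : R -> V) (K : kv) (y : V) : nat :=
  (\max_(j < size K | gam (kz K j) == y) km K j)%N.
(* element T_j = gamma([zhat_{j-1}, zhat_j]), 1 <= j <= n *)
Definition elem (gam : R -> V) (K : kv) (j : nat) : set V :=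
  gam @` [set t | kz K j.-1 <= t <= kz K j].
Definition len (K : kv) (j : nat) : R := kz K j - kz K j.-1.

Definition kappa_le (gam : R -> V) (K : kv) (kappa : R) : Prop :=
  forall j j', (0 < j <= kn K)%N -> (0 < j' <= kn K)%N ->
    elem gam K j `&` elem gam K j' !=set0 -> len K j <= kappa * len K j'.

Definition bisect (K : kv) (j : nat) : kv :=
  take j K ++ ((kz K j.-1 + kz K j) / 2, 1%N) :: drop j K.
Definition incmult (K : kv) (j : nat) : kv :=
  set_nth (0, 0%N) K j (kz K j, (km K j).+1).
Definition kstep (p : nat) (K K' : kv) : Prop :=
  (exists2 j, (0 < j < size K)%N & K' = bisect K j) \/
  (exists2 j, (0 < j < kn K)%N & (km K j < p)%N /\ K' = incmult K j).

Definition inKK (p : nat) (a b : R) (gam : R -> V) (kappamax : R)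
    (K0 K : kv) : Prop :=
  clos_refl_trans kv (kstep p) K0 K /\ kv_valid p a b gam K /\
  kappa_le gam K kappamax.

Definition refines (gam : R -> V) (Kb Kc : kv) : Prop :=
  nodes gam Kb `<=` nodes gam Kc /\
  (forall y, nodes gam Kb y -> (nmult gam Kb y <= nmult gam Kc y)%N) /\
  (forall j, (0 < j <= kn Kc)%N -> exists j', (0 < j' <= kn Kb)%N /\
     elem gam Kc j `<=` elem gam Kb j' /\
     exists g : nat, len Kb j' = 2 ^+ g * len Kc j).

Definition knot_list (K : kv) : seq R :=
  flatten [seq nseq (km K j) (kz K j) | j <- iota 1 (kn K)].

(* t_{-p} = ... = t_0 = a, t_1..t_N the list above; the fixed extension
   t_{-p-1-k} = ext_l k, t_{N+1+k} = ext_r k. *)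
Definition knot (p : nat) (a : R) (ext_l ext_r : nat -> R) (K : kv)
    (i : int) : R :=
  if i <= - (p%:Z) - 1 then ext_l (absz (- i - p%:Z - 1)%R)
  else if i <= 0 then a
  else if i <= (kN K)%:Z then nth 0 (knot_list K) (absz i).-1
  else ext_r (absz (i - (kN K)%:Z - 1)%R).

Definition knot_ext_ok (a b : R) (ext_l ext_r : nat -> R) : Prop :=
  ext_l 0%N <= a /\ (forall k, ext_l k.+1 <= ext_l k) /\
  ext_l @ \oo --> -oo /\
  b < ext_r 0%N /\ (forall k, ext_r k <= ext_r k.+1) /\
  ext_r @ \oo --> +oo.

Definition beta (tk : int -> R) (i : int) (q : nat) (x : R) : R :=
  if tk i != tk (i + q%:Z) then (x - tk i) / (tk (i + q%:Z) - tk i) else 0.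

Fixpoint bspl (tk : int -> R) (q : nat) (i : int) (x : R) {struct q} : R :=
  match q with
  | 0%N => if (tk (i - 1) <= x) && (x < tk i) then 1 else 0
  | q'.+1 => beta tk (i - 1) q x * bspl tk q' i x
             + (1 - beta tk i q x) * bspl tk q' (i + 1) x
  end.

(* basis index 1-p+k, k = 0..N-1, runs through 1-p..N-p *)
Definition bidx (p k : nat) : int := k%:Z + 1 - p%:Z.

Definition spline (p : nat) (tk : int -> R) (N : nat) (c : int -> R) (x : R) : R :=
  \sum_(k < N) c (bidx p k) * bspl tk p (bidx p k) x.

(* Rbar-hat_{i} in the parameter domain: Rbar_{i,p} = Rbarhat_i o gamma^{-1} *)
Definition Rhat (p : nat) (tk : int -> R) (wl : int -> R) (what : R -> R)
    (i : int) (x : R) : R := wl i * bspl tk p i x / what x.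
Definition Rbarhat (p : nat) (tk : int -> R) (N : nat) (wl : int -> R)
    (what : R -> R) (i : int) (x : R) : R :=
  if i == 1 - p%:Z then Rhat p tk wl what (1 - p%:Z) x
                        + Rhat p tk wl what (N%:Z - p%:Z) x
  else Rhat p tk wl what i x.

(* support of f o gamma^{-1}, gamma^{-1} = (gamma|[a,b))^{-1} *)
Definition supp_on (a b : R) (gam : R -> V) (f : R -> R) : set V :=
  closure [set y | exists t, a <= t < b /\ gam t = y /\ f t != 0].

Definition tnodes (gam : R -> V) (Ks : nat -> kv) (l : nat) : set V :=
  match l with
  | 0%N => nodes gam (Ks 0%N)
  | l'.+1 => (nodes gam (Ks l) `\` nodes gam (Ks l')) `|`
             [set y | nodes gam (Ks l) y /\ nodes gam (Ks l') y /\
                      (nmult gam (Ks l') y < nmult gam (Ks l) y)%N]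
  end.

Definition is_gen (gam : R -> V) (K0 K : kv) (j g : nat) : Prop :=
  exists j0, (0 < j0 <= kn K0)%N /\ elem gam K j `<=` elem gam K0 j0 /\
    len K0 j0 = 2 ^+ g * len K j.
Definition level_is (gam : R -> V) (K0 K : kv) (y : V) (m : nat) : Prop :=
  (exists2 j, (0 < j <= kn K)%N & elem gam K j y /\ is_gen gam K0 K j m) /\
  (forall j g, (0 < j <= kn K)%N -> elem gam K j y -> is_gen gam K0 K j g ->
     (g <= m)%N).

Definition Itil (closed : bool) (p : nat) (a b : R) (gam : R -> V)
    (ext_l ext_r : nat -> R) (Ks : nat -> kv) (w : nat -> int -> R)
    (what : R -> R) (l : nat) (i : int) : Prop :=
  let o : int := if closed then 0 else 1 in
  let K := Ks l in
  (1 - p%:Z + o <= i <= (kN K)%:Z - p%:Z - 1) /\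
  (supp_on a b gam (Rbarhat p (knot p a ext_l ext_r K) (kN K) (w l) what i)
    `&` tnodes gam Ks l) !=set0.

Definition Zset (closed : bool) (p : nat) (a b : R) (gam : R -> V)
    (ext_l ext_r : nat -> R) (Ks : nat -> kv) (w : nat -> int -> R)
    (what : R -> R) (zt : nat -> int -> V) (L m : nat) (z : V)
    : set (nat * int) :=
  [set li | (li.1 <= L)%N /\
            Itil closed p a b gam ext_l ext_r Ks w what li.1 li.2 /\
            level_is gam (Ks 0%N) (Ks li.1) (zt li.1 li.2) m /\
            z = zt li.1 li.2].

End Defs.

(* Main.v *)
Require Import Defs.
From Stdlib Require Import Relations.Relation_Operators.
From HB Require Import structures.
From mathcomp Require Import all_boot all_order all_algebra.
From mathcomp Require Import all_classical all_reals all_analysis.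
From mathcomp Require Import zify ring lra.
Import Order.TTheory GRing.Theory Num.Theory.
Import numFieldNormedType.Exports.
Local Open Scope classical_set_scope.
Local Open Scope ring_scope.

HB.instance Definition _ n := isPointed.Build 'I_n.+1 ord0.

Section S. Variable R : realType.

Definition fl (f : nat -> R) (c : nat -> nat) m n :=
  flatten [seq nseq (c j) (f j) | j <- iota m n].

Lemma fl_cons f c m n : fl f c m n.+1 = nseq (c m) (f m) ++ fl f c m.+1 n.
Proof. by []. Qed.

Lemma fl_mem f c m n x : x \in fl f c m n -> exists2 j, (m <= j < m+n)%N & x = f j.
Proof.
elim: n m => [|n IH] m //=.
rewrite fl_cons mem_cat mem_nseq => /orP[/andP[_ /eqP->]|/IH[j hj ->]].
  by exists m => //; lia.
by exists j => //; lia.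
Qed.

Lemma fl_sorted f c m n u v :
  (forall j k, (m <= j)%N -> (j < k)%N -> (k < m+n)%N -> f j < f k) ->
  (u <= v < size (fl f c m n))%N -> nth 0 (fl f c m n) u <= nth 0 (fl f c m n) v.
Proof.
elim: n m u v => [|n IH] m u v H //=; first by move=> /andP[_]; rewrite /fl /=.
rewrite fl_cons !nth_cat size_nseq size_cat size_nseq => /andP[huv hv].
have Hs : forall x, x \in fl f c m.+1 n -> f m < x.
  move=> x /fl_mem[j hj ->]; apply: H; lia.
case: ifP => hu.
  rewrite nth_nseq hu; case: ifP => hv'; first by rewrite nth_nseq hv'.
  move/negbT: hv'; rewrite -leqNgt => hv'; apply/ltW/Hs/mem_nth; by rewrite ltn_subLR.
have hv' : (v < c m)%N = false by lia.
rewrite hv'; apply: IH; last by lia.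
move=> j k h1 h2 h3; apply: H; lia.
Qed.

Lemma fl_strict f c m n u v P :
  (forall j k, (m <= j)%N -> (j < k)%N -> (k < m+n)%N -> f j < f k) ->
  (forall j, (m <= j < m + n)%N -> (c j <= P)%N) ->
  (u + P <= v)%N -> (v < size (fl f c m n))%N ->
  nth 0 (fl f c m n) u < nth 0 (fl f c m n) v.
Proof.
elim: n m u v => [|n IH] m u v H Hc //=.
rewrite fl_cons !nth_cat size_nseq size_cat size_nseq => huv hv.
have Hs : forall x, x \in fl f c m.+1 n -> f m < x.
  move=> x /fl_mem[j hj ->]; apply: H; lia.
have hcm : (c m <= P)%N by apply: Hc; lia.
have hv' : (v < c m)%N = false by lia.
rewrite hv'; case: ifP => hu.
  rewrite nth_nseq hu; apply/Hs/mem_nth; set sz := size _ in hv *; lia.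
apply: IH; try lia.
  move=> j k h1 h2 h3; apply: H; lia.
move=> j hj; apply: Hc; lia.
Qed.

Lemma fl_size f c m n : size (fl f c m n) = (\sum_(j <- iota m n) c j)%N.
Proof.
elim: n m => [|n IH] m; first by rewrite big_nil.
by rewrite fl_cons size_cat size_nseq IH /= big_cons.
Qed.

Lemma kN_size (K : kv R) : kN K = size (knot_list K).
Proof.
by rewrite /kN /index_iota subSS subn0 (fl_size (kz K) (km K) 1 (kn K)).
Qed.

Lemma kv_strict {p} {a b : R} {gam} {K : kv R} : kv_valid p a b gam K ->
  forall j k, (j < k)%N -> (k <= kn K)%N -> kz K j < kz K k.
Proof.
move=> [_ [_ [_ [_ [_ [H _]]]]]] j k; elim: k => [//|k IH] hjk hk.
case: (ltngtP j k) => hjk'.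
- apply: lt_trans (IH hjk' (ltnW hk)) (H _ hk).
- lia.
- by rewrite hjk'; apply: H.
Qed.

Lemma kv_mult {p} {a b : R} {gam} {K : kv R} : kv_valid p a b gam K ->
  forall j, (j <= kn K)%N -> (0 < km K j <= p.+1)%N.
Proof.
move=> [_ [_ [_ [h0 [hn [_ [H _]]]]]]] j hj.
have [->|hj0] := posnP j; first by rewrite h0 leqnn.
have [hjn|hjn|->] := ltngtP j (kn K).
- have /H : (0 < j < kn K)%N by rewrite hj0 hjn.
  lia.
- lia.
- by rewrite hn leqnn.
Qed.

Lemma knot_val p (a : R) el er (K : kv R) (i : int) : (- (p%:Z) <= i)%R -> (i <= (kN K)%:Z)%R ->
  knot p a el er K i = if (i <= 0)%R then a else nth 0 (knot_list K) (absz i).-1.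
Proof.
move=> h1 h2; rewrite /knot.
have -> : (i <= - (p%:Z) - 1)%R = false by lia.
case: ifP => // _; by rewrite h2.
Qed.

Lemma kl_mem {p} {a b : R} {gam} {K : kv R} {x} : kv_valid p a b gam K ->
  x \in knot_list K -> a < x.
Proof.
move=> hK /(fl_mem (kz K) (km K) 1 (kn K))[j hj ->].
have := hK => [[_ [<- _]]]; apply: (kv_strict hK); lia.
Qed.

Lemma kl_sorted {p} {a b : R} {gam} {K : kv R} {u v} : kv_valid p a b gam K ->
  (u <= v < size (knot_list K))%N -> nth 0 (knot_list K) u <= nth 0 (knot_list K) v.
Proof.
move=> hK; apply: (fl_sorted (kz K) (km K) 1 (kn K)).
move=> j k h1 h2 h3; apply: (kv_strict hK); lia.
Qed.

Lemma kl_strict {p} {a b : R} {gam} {K : kv R} {u v} : kv_valid p a b gam K ->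
  (u + p.+1 <= v)%N -> (v < size (knot_list K))%N ->
  nth 0 (knot_list K) u < nth 0 (knot_list K) v.
Proof.
move=> hK; apply: (fl_strict (kz K) (km K) 1 (kn K)).
  move=> j k h1 h2 h3; apply: (kv_strict hK); lia.
move=> j hj; have := kv_mult hK j; lia.
Qed.

Lemma knot_mono {p} {a b : R} {gam} el er {K : kv R} (u v : int) : kv_valid p a b gam K ->
  (- (p%:Z) <= u)%R -> (u <= v)%R -> (v <= (kN K)%:Z)%R ->
  knot p a el er K u <= knot p a el er K v.
Proof.
move=> hK h1 h2 h3; rewrite !knot_val; try lia.
have hs := kN_size K.
case: ifP => hu; case: ifP => hv //.
- case: v h2 h3 hv => [n|n] h2 h3 hv; last by lia.
  apply/ltW/(kl_mem hK)/mem_nth; rewrite -hs /=; lia.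
- lia.
- case: u v h1 h2 h3 hu hv => [n1|n1] [n2|n2] h1 h2 h3 hu hv; try lia.
  apply: (kl_sorted hK); rewrite -hs /=; lia.
Qed.

Lemma knot_strict {p} {a b : R} {gam} el er {K : kv R} (u v : int) : kv_valid p a b gam K ->
  (1 <= u)%R -> (u + p%:Z + 1 <= v)%R -> (v <= (kN K)%:Z)%R ->
  knot p a el er K u < knot p a el er K v.
Proof.
move=> hK h1 h2 h3; rewrite !knot_val; try lia.
have hs := kN_size K.
have -> : (u <= 0)%R = false by lia.
have -> : (v <= 0)%R = false by lia.
case: u v h1 h2 h3 => [n1|n1] [n2|n2] h1 h2 h3; try lia.
apply: (kl_strict hK); rewrite -?hs /=; lia.
Qed.

Lemma bspl_supp (tk : int -> R) q (i : int) x :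
  (forall u v : int, (i - 1 <= u)%R -> (u <= v)%R -> (v <= i + q%:Z)%R -> tk u <= tk v) ->
  bspl tk q i x != 0 -> tk (i - 1) <= x < tk (i + q%:Z).
Proof.
elim: q i => [|q IH] i H /=.
  by rewrite addr0; case: ifP => //; rewrite eqxx.
case: (boolP (bspl tk q i x == 0)) => [/eqP h1|h1].
  rewrite h1 mulr0 add0r => /negP h2.
  have h3 : bspl tk q (i + 1) x != 0 by apply/negP => /eqP h; apply: h2; rewrite h mulr0.
  have H' : forall u v : int, (i + 1 - 1 <= u)%R -> (u <= v)%R -> (v <= i + 1 + q%:Z)%R -> tk u <= tk v.
    move=> u v hu huv hv; apply: H; lia.
  have := IH (i + 1) H' h3.
  have -> : i + 1 - 1 = i by lia.
  have -> : i + 1 + q%:Z = i + q.+1%:Z by lia.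
  move=> /andP[ha hb].
  rewrite hb andbT; apply: le_trans ha; apply: H; lia.
move=> _; have /andP[ha hb] := IH i (fun u v hu huv hv => H u v hu huv ltac:(lia)) h1.
rewrite ha /=; apply: lt_le_trans hb _; apply: H; lia.
Qed.

Lemma nmult_le {p} {a b : R} {gam} {K : kv R} y : kv_valid p a b gam K ->
  (nmult gam K y <= p.+1)%N.
Proof.
move=> hK; apply/bigmax_leqP => j _.
have := kv_mult hK j; have := ltn_ord j; rewrite /kn; lia.
Qed.

Lemma nmult_pos {p} {a b : R} {gam} {K : kv R} y : kv_valid p a b gam K ->
  nodes gam K y -> (0 < nmult gam K y)%N.
Proof.
move=> hK [j hj hy].
have := @leq_bigmax_cond _ (fun i : 'I_(size K) => gam (kz K i) == y) (fun i => km K i) (Ordinal hj).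
rewrite /= hy eqxx => /(_ isT).
have hj2 : (j <= kn K)%N by rewrite /kn -ltnS (ltn_predK hj).
move=> h1; have /andP[h2 _] := kv_mult hK j hj2; exact: leq_trans h2 h1.
Qed.

Lemma nmult_0 (gam : R -> 'rV[R]_2) (K : kv R) y : ~ nodes gam K y -> nmult gam K y = 0%N.
Proof.
move=> hn; apply/eqP; rewrite -leqn0; apply/bigmax_leqP => j /eqP hj.
by exfalso; apply: hn; exists j.
Qed.

Section Seq.
Variables (p : nat) (a b : R) (gam : R -> 'rV[R]_2) (Ks : nat -> kv R) (z : 'rV[R]_2).
Hypothesis hval : forall l, kv_valid p a b gam (Ks l).
Hypothesis href : forall l, refines gam (Ks l) (Ks l.+1).
Let c l := nmult gam (Ks l) z.

Lemma c_step l : (c l <= c l.+1)%N.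
Proof.
rewrite /c; have [hn|hn] := pselect (nodes gam (Ks l) z).
  exact: (href l).2.1.
by rewrite nmult_0.
Qed.

Lemma c_mono l1 l2 : (l1 <= l2)%N -> (c l1 <= c l2)%N.
Proof.
elim: l2 => [|l2 IH]; first by rewrite leqn0 => /eqP->.
rewrite leq_eqVlt => /orP[/eqP->//|h].
exact: leq_trans (IH h) (c_step l2).
Qed.

Lemma c_tn l : tnodes gam Ks l.+1 z -> (c l < c l.+1)%N.
Proof.
rewrite /c /= => -[[h1 h2]|[_ [_ h]]] //.
by rewrite nmult_0 // (nmult_pos _ (hval _)).
Qed.

Lemma c_inj l1 l2 : tnodes gam Ks l1 z -> tnodes gam Ks l2 z -> c l1 = c l2 -> l1 = l2.
Proof.
wlog h : l1 l2 / (l1 <= l2)%N.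
  move=> W h1 h2 e; case: (leqP l1 l2) => h; first exact: W.
  by symmetry; apply: W => //; apply: ltnW.
move=> _ h2 e; rewrite leq_eqVlt in h; case/orP: h => [/eqP //|h].
case: l2 h h2 e => [//|l2] h h2 e.
have h3 := c_tn _ h2; have h4 := c_mono l1 l2 h; rewrite /c in h3 h4 e; move: h3 h4 e; move: (nmult gam (Ks l1) z) (nmult gam (Ks l2) z) (nmult gam (Ks l2.+1) z) => x y w; lia.
Qed.

End Seq.

Lemma supp_sub (gam: R -> 'rV[R]_2) a b c d (f : R->R):
 {within [set t | a <= t <= b], continuous gam} ->
 (forall t, a <= t < b -> f t != 0 -> c <= t <= d) ->
 supp_on a b gam f `<=` gam @` [set t | (a <= t <= b) /\ (c <= t <= d)].
Proof.
move=> hc hf.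
have E : [set t | (a <= t <= b) /\ (c <= t <= d)] = `[a,b] `&` `[c,d].
  by apply/seteqP; split=> t /=; rewrite !in_itv /=.
have cpt : compact (gam @` [set t | (a <= t <= b) /\ (c <= t <= d)]).
  apply: continuous_compact.
    by apply: continuous_subspaceW hc => t [].
  rewrite E; apply: compact_closedI; [exact: segment_compact| exact: itv_closed].
have cl : closed (gam @` [set t | (a <= t <= b) /\ (c <= t <= d)]).
  apply: compact_closed cpt. apply: norm_hausdorff.
move/closure_id: cl => ->.
apply: closureS => y [t [/andP[h1 h2] [<- h3]]].
exists t => //; split; first by rewrite h1 ltW.
by apply: hf => //; rewrite h1 h2.
Qed.

Lemma curve_cont {closed} {a b : R} {gam} : curve_ok closed a b gam ->
  {within [set t | a <= t <= b], continuous gam}.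
Proof. by case=> _ []. Qed.

Lemma curve_inj {closed} {a b : R} {gam} : curve_ok closed a b gam ->
  forall s t, a <= s < b -> a <= t < b -> gam s = gam t -> s = t.
Proof.
case=> _ [_ [_ [H _]]]; case: closed H => [[_ H] //|H] s t hs ht.
apply: H; [move: hs | move: ht] => /andP[-> /ltW ->] //.
Qed.

Lemma anchor p closed (a b : R) gam el er (K : kv R) (wl : int -> R) what (i : int) y :
 curve_ok closed a b gam -> kv_valid p a b gam K ->
 (1 - p%:Z <= i)%R -> (i <= (kN K)%:Z - p%:Z - 1)%R -> i != 1 - p%:Z ->
 supp_on a b gam (Rbarhat p (knot p a el er K) (kN K) wl what i) y ->
 exists s, [/\ a <= s <= b, knot p a el er K (i-1) <= s <= knot p a el er K (i + p%:Z) & gam s = y].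
Proof.
move=> hC hK h1 h2 hi hy.
have hf : forall t, a <= t < b -> Rbarhat p (knot p a el er K) (kN K) wl what i t != 0 ->
    knot p a el er K (i-1) <= t <= knot p a el er K (i + p%:Z).
  move=> t ht; rewrite /Rbarhat (negbTE hi) /Rhat => hne.
  have hb : bspl (knot p a el er K) p i t != 0.
    by apply: contraNneq hne => ->; rewrite mulr0 mul0r.
  by have /andP[-> /ltW ->] := bspl_supp (knot p a el er K) p i t (fun u v hu huv hv => knot_mono el er u v hK ltac:(lia) huv ltac:(lia)) hb.
have := supp_sub _ _ _ _ _ _ (curve_cont hC) hf _ hy.
by case=> s [hs1 hs2] <-; exists s; split.
Qed.

Lemma cluster {p} {a b : R} {gam} el er {K : kv R} (i1 i2 : int) s :
  kv_valid p a b gam K ->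
  (1 - p%:Z <= i1)%R -> (i1 <= (kN K)%:Z - p%:Z - 1)%R ->
  (1 - p%:Z <= i2)%R -> (i2 <= (kN K)%:Z - p%:Z - 1)%R ->
  knot p a el er K (i1-1) <= s <= knot p a el er K (i1 + p%:Z) ->
  knot p a el er K (i2-1) <= s <= knot p a el er K (i2 + p%:Z) ->
  (i2 <= i1 + 2 * p%:Z + 1)%R.
Proof.
move=> hK h1 h2 h3 h4 /andP[_ ha] /andP[hb _].
rewrite leNgt; apply/negP => hlt.
have := knot_strict el er (i1 + p%:Z) (i2 - 1) hK ltac:(lia) ltac:(lia) ltac:(lia).
move=> hs; have := le_lt_trans (le_trans hb ha) hs; by rewrite ltxx.
Qed.

Lemma mod_eq (n1 n2 d : nat) : (n1 %% d = n2 %% d)%N -> (n1 < n2 + d)%N -> (n2 < n1 + d)%N -> n1 = n2.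
Proof.
wlog h : n1 n2 / (n1 <= n2)%N.
  move=> W e h2 h3; case: (leqP n1 n2) => h; first exact: W.
  by symmetry; apply: W => //; apply: ltnW.
move=> e _ h3; have [k hk] : exists k, n2 = (n1 + k)%N by exists (n2 - n1)%N; lia.
subst n2; have hkd : (k < d)%N by lia.
move: e; rewrite -{1}(addn0 n1) => /eqP; rewrite eqn_modDl mod0n modn_small // => /eqP <-.
by rewrite addn0.
Qed.

Lemma decode c1 c2 r1 r2 M : (r1 < M)%N -> (r2 < M)%N -> (c1 * M + r1 = c2 * M + r2)%N ->
  c1 = c2 /\ r1 = r2.
Proof.
move=> h1 h2 e.
have M0 : (0 < M)%N by lia.
have e1 := congr1 (divn^~ M) e; rewrite /= !divnMDl // !divn_small // !addn0 in e1.
by split => //; move: e; rewrite e1 => /addnI.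
Qed.

End S.

Lemma int_nat (p : nat) (i : int) : (1 - p%:Z <= i)%R -> exists n : nat, i + p%:Z - 1 = n%:Z.
Proof. by move=> h; exists (absz (i + p%:Z - 1)%R); rewrite gez0_abs //; lia. Qed.

Lemma final_arith (p : nat) (i1 i2 : int) : (1 - p%:Z <= i1)%R -> (1 - p%:Z <= i2)%R ->
  (i2 <= i1 + 2 * p%:Z + 1)%R -> (i1 <= i2 + 2 * p%:Z + 1)%R ->
  (absz (i1 + p%:Z - 1)%R = absz (i2 + p%:Z - 1)%R %[mod 2 * p + 2])%N -> i1 = i2.
Proof.
move=> h1 h2 c1 c2; have [n1 hn1] := int_nat _ _ h1; have [n2 hn2] := int_nat _ _ h2.
rewrite hn1 hn2 /= => em.
have := mod_eq _ _ _ em ltac:(lia) ltac:(lia).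
lia.
Qed.

Local Open Scope card_scope.

Theorem lemma4p3 :
  forall p : nat, (0 < p)%N ->
  exists C2 : nat, (0 < C2)%N /\
  forall (R : realType) (closed : bool) (a b : R) (gam : R -> 'rV[R]_2)
    (ext_l ext_r : nat -> R) (K0 : kv R) (kappamax : R) (w0 : int -> R)
    (Ks : nat -> kv R) (w : nat -> int -> R) (zt : nat -> int -> 'rV[R]_2)
    (L m : nat) (z : 'rV[R]_2),
  (* geometry *)
  curve_ok closed a b gam ->
  (* fixed extension of the knots outside (a,b] *)
  knot_ext_ok a b ext_l ext_r ->
  (* initial knot vector, kappa_max >= 1 *)
  kv_valid p a b gam K0 -> 1 <= kappamax ->
  (* initial weights *)
  (forall k, (k < kN K0)%N -> 0 < w0 (bidx p k)) ->
  w0 (1 - p%:Z) = w0 ((kN K0)%:Z - p%:Z) ->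
  (* the sequence (K_l) in KK with K_{l+1} in refine(K_l) *)
  Ks 0%N = K0 ->
  (forall l, inKK p a b gam kappamax K0 (Ks l)) ->
  (forall l, refines gam (Ks l) (Ks l.+1)) ->
  (* w_{l,i}: coefficients of what = sum_k w_{0,k} Bhat_{0,k,p} w.r.t. K_l *)
  (forall l x, a <= x <= b ->
     spline p (knot p a ext_l ext_r K0) (kN K0) w0 x =
     spline p (knot p a ext_l ext_r (Ks l)) (kN (Ks l)) (w l) x) ->
  (* the fixed choice of nodes tilde z_{l,i} *)
  (forall l i,
     Itil closed p a b gam ext_l ext_r Ks w
       (spline p (knot p a ext_l ext_r K0) (kN K0) w0) l i ->
     tnodes gam Ks l (zt l i) /\
     supp_on a b gam
       (Rbarhat p (knot p a ext_l ext_r (Ks l)) (kN (Ks l)) (w l)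
          (spline p (knot p a ext_l ext_r K0) (kN K0) w0) i) (zt l i)) ->
  (* z in N_L *)
  nodes gam (Ks L) z ->
  Zset closed p a b gam ext_l ext_r Ks w
    (spline p (knot p a ext_l ext_r K0) (kN K0) w0) zt L m z
    #<= [set: 'I_C2].
Proof.
move=> p p0.
pose M := (4 * p + 4).+1.
exists (p.+1 * M + (4 * p + 4)).+1; split => //.
move=> R closed a b gam el er K0 kappamax w0 Ks w zt L m z hC hext hK0 hkap hw0 hw0e
  hKs0 hKK href hspl hzt hzL.
set what := spline p (knot p a el er K0) (kN K0) w0.
have hval : forall l, kv_valid p a b gam (Ks l) := fun l => (hKK l).2.1.
pose tk := fun l => knot p a el er (Ks l).
pose c := fun l => nmult gam (Ks l) z.
pose bit := fun (l : nat) (i : int) =>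
  `[< exists s, a <= s < b /\ tk l (i - 1) <= s <= tk l (i + p%:Z) /\ gam s = z >].
pose r := fun l i => if i == 1 - p%:Z then 0%N
  else (1 + bit l i * (2 * p + 2) + (absz (i + p%:Z - 1)%R) %% (2 * p + 2))%N.
pose phi := fun li : nat * int => (c li.1 * M + r li.1 li.2)%N.
have rb : forall l i, (r l i < M)%N.
  move=> l i; rewrite /r /M; case: ifP => _ //.
  have := ltn_pmod (absz (i + p%:Z - 1)%R) (_ : (0 < 2 * p + 2)%N); case: (bit l i) => /= h; lia.
have phib : forall li, (phi li < (p.+1 * M + (4 * p + 4)).+1)%N.
  move=> li; rewrite /phi ltnS; apply: leq_add; last by have := rb li.1 li.2; rewrite /M; lia.
  by apply: leq_mul => //; apply: nmult_le (hval _).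
apply/pcard_injP; exists (fun li => inord (phi li)).
move=> [l1 i1] [l2 i2] /set_mem H1 /set_mem H2 e.
have {e} e : phi (l1, i1) = phi (l2, i2).
  by move/(congr1 (@nat_of_ord _)): e; rewrite !inordK.
case: H1 => /= hL1 [hI1 [_ hz1]].
case: H2 => /= hL2 [hI2 [_ hz2]].
have [htn1 hsu1] := hzt _ _ hI1.
have [htn2 hsu2] := hzt _ _ hI2.
rewrite -hz1 in htn1 hsu1; rewrite -hz2 in htn2 hsu2.
have [r1a r1b] : (1 - p%:Z <= i1)%R /\ (i1 <= (kN (Ks l1))%:Z - p%:Z - 1)%R.
  by move: hI1; rewrite /Itil /= => -[/andP[h1 h2] _]; split => //; move: h1; case: (closed) => /=; lia.
have [r2a r2b] : (1 - p%:Z <= i2)%R /\ (i2 <= (kN (Ks l2))%:Z - p%:Z - 1)%R.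
  by move: hI2; rewrite /Itil /= => -[/andP[h1 h2] _]; split => //; move: h1; case: (closed) => /=; lia.
have [ec erq] := decode _ _ _ _ _ (rb l1 i1) (rb l2 i2) e.
have el12 : l1 = l2 := @c_inj R p a b gam Ks z hval href l1 l2 htn1 htn2 ec.
subst l2.
suff -> : i1 = i2 by [].
move: erq; rewrite /r.
case: (boolP (i1 == 1 - p%:Z)) => [/eqP hi1|hi1]; case: (boolP (i2 == 1 - p%:Z)) => [/eqP hi2|hi2].
- by rewrite hi1 hi2.
- by move=> /eqP; rewrite -addnA add1n.
- by move=> /eqP; rewrite -addnA add1n.
move=> erq; have {}erq : (bit l1 i1 * (2 * p + 2) + (absz (i1 + p%:Z - 1)%R) %% (2 * p + 2)
   = bit l1 i2 * (2 * p + 2) + (absz (i2 + p%:Z - 1)%R) %% (2 * p + 2))%N by lia.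
have d0 : (0 < 2 * p + 2)%N by lia.
have [eb em] := decode _ _ _ _ _ (ltn_pmod _ d0) (ltn_pmod _ d0) erq.
have [s1 [hs1 hk1 hg1]] := @anchor R p closed a b gam el er (Ks l1) _ _ i1 z hC (hval l1) r1a r1b hi1 hsu1.
have [s2 [hs2 hk2 hg2]] := @anchor R p closed a b gam el er (Ks l1) _ _ i2 z hC (hval l1) r2a r2b hi2 hsu2.
have [s [hk1' hk2']] : exists s, knot p a el er (Ks l1) (i1 - 1) <= s <= knot p a el er (Ks l1) (i1 + p%:Z)
   /\ knot p a el er (Ks l1) (i2 - 1) <= s <= knot p a el er (Ks l1) (i2 + p%:Z).
  case hb1 : (bit l1 i1).
    have hb2 : bit l1 i2 by move: eb; rewrite hb1; case: (bit l1 i2).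
    move: hb1 hb2 => /asboolP [t1 [ht1 [hk1t hg1t]]] /asboolP [t2 [ht2 [hk2t hg2t]]].
    have ett : t1 = t2 by apply: (curve_inj R hC) => //; rewrite hg1t hg2t.
    by exists t1; split => //; rewrite ett.
  have hb2 : bit l1 i2 = false by move: eb; rewrite hb1; case: (bit l1 i2).
  have eb1 : s1 = b.
    apply/eqP; rewrite eq_le; case/andP: (hs1) => _ -> /=; rewrite leNgt; apply/negP => hlt.
    move/negbT: hb1 => /negP; apply; apply/asboolP; exists s1; split => //.
    by case/andP: hs1 => -> _; rewrite hlt.
  have eb2 : s2 = b.
    apply/eqP; rewrite eq_le; case/andP: (hs2) => _ -> /=; rewrite leNgt; apply/negP => hlt.
    move/negbT: hb2 => /negP; apply; apply/asboolP; exists s2; split => //.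
    by case/andP: hs2 => -> _; rewrite hlt.
  by exists s1; split => //; rewrite eb1 -eb2.
have c1 := cluster R el er i1 i2 s (hval l1) r1a r1b r2a r2b hk1' hk2'.
have c2 := cluster R el er i2 i1 s (hval l1) r2a r2b r1a r1b hk2' hk1'.
exact: final_arith r1a r2a c1 c2 em.
Qed.
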